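(* Let $K$ be a real quadratic field, let $n,f,m\in\mathbb{Z}_{\geq 1}$, and let $\mathcal{O}\supseteq\mathcal{O}'$ be the orders of $K$ with $\mathrm{cond}(\mathcal{O})=m$ and $\mathrm{cond}(\mathcal{O}')=nm$. Set $\mathfrak{f}=f\mathcal{O}$ and $\mathfrak{f}'=f\mathcal{O}'$. (i) For every $\mathfrak{a}\in I_{\mathcal{O}}(n\mathfrak{f})$, the lattice $\mathfrak{a}\cap\mathcal{O}'$ is $\mathcal{O}'$-invertible. Moreover the map $\Theta:I_{\mathcal{O}}(n\mathfrak{f})\to I_{\mathcal{O}'}(\mathfrak{f}')$, $\Theta(\mathfrak{a})=\mathfrak{a}\cap\mathcal{O}'$, is multiplicative: $\Theta(\mathfrak{a}\mathfrak{a}')=\Theta(\mathfrak{a})\Theta(\mathfrak{a}')$ for all $\mathfrak{a},\mathfrak{a}'\in I_{\mathcal{O}}(n\mathfrak{f})$. (ii) If $\mathfrak{a},\mathfrak{a}'\in I_{\mathcal{O}}(n\mathfrak{f})$ satisfy $\mathfrak{a}\sim_{nf}\mathfrak{a}'$, then $\Theta(\mathfrak{a})\sim_f\Theta(\mathfrak{a}')$; consequently $\Theta$ induces a well-defined surjective map $\widetilde{\Theta}:C_{\mathcal{O}}(n\mathfrak{f})\to C_{\mathcal{O}'}(\mathfrak{f}')$.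
   Context: For a positive integer $k$, $\mathcal{O}_k=\mathbb{Z}+k\omega\mathbb{Z}$ denotes the unique order of $K$ of conductor $k$, where $\mathcal{O}_K=\mathbb{Z}+\omega\mathbb{Z}$. A lattice is a free $\mathbb{Z}$-submodule of rank 2 of $K$; for a lattice $L$, $\mathrm{End}_K(L)=\{\lambda\in K:\lambda L\subseteq L\}$ and $L^{-1}=\{\lambda\in K:\lambda L\subseteq\mathrm{End}_K(L)\}$. An $\mathcal{O}$-ideal is a lattice stable under $\mathcal{O}$; it is invertible ($\mathcal{O}$-invertible) if its endomorphism ring equals $\mathcal{O}$. For an $\mathcal{O}$-ideal $\mathfrak{g}\subseteq\mathcal{O}$, $I_{\mathcal{O}}(\mathfrak{g})$ is the set of invertible $\mathcal{O}$-ideals $\mathfrak{b}\subseteq\mathcal{O}$ with $\mathfrak{b}+\mathfrak{g}=\mathcal{O}$. For lattices $L_1,L_2$ and a positive integer $g$, $L_1\sim_g L_2$ means there is a totally positive $\lambda\in L_1^{-1}g+1$ with $\lambda L_1=L_2$ (totally positive: $\lambda>0$ and its Galois conjugate $\lambda^\sigma>0$); for $\mathfrak{g}=g\mathcal{O}$ the relation $\sim_{\mathfrak{g}}$ on invertible $\mathcal{O}$-ideals is the same as $\sim_g$. The narrow extended class group is $C_{\mathcal{O}}(\mathfrak{g})=I_{\mathcal{O}}(\mathfrak{g})/\sim_{\mathfrak{g}}$. *)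

(* Defs.v *)
(* The real quadratic field K = Q(sqrt d) (d > 1 squarefree)
   is modelled concretely as pairs (a, b) of rationals standing for a + b*sqrt d. *)
From mathcomp Require Import all_boot all_order all_algebra all_field.
Set Implicit Arguments. Unset Strict Implicit. Unset Printing Implicit Defensive.
Import Order.TTheory GRing.Theory Num.Theory.
Local Open Scope ring_scope.

Definition qf := (rat * rat)%type.

Definition kzero : qf := (0, 0).
Definition kone : qf := (1, 0).
Definition kadd (x y : qf) : qf := (x.1 + y.1, x.2 + y.2).
Definition kmul (d : nat) (x y : qf) : qf :=
  (x.1 * y.1 + d%:R * (x.2 * y.2), x.1 * y.2 + x.2 * y.1).
Definition kconj (x : qf) : qf := (x.1, - x.2).
Definition kscale (m : int) (x : qf) : qf := (m%:~R * x.1, m%:~R * x.2).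

Definition kemb (d : nat) (x : qf) : algC := ratr x.1 + ratr x.2 * sqrtC d%:R.
Definition totally_positive (d : nat) (x : qf) : Prop :=
  0 < kemb d x /\ 0 < kemb d (kconj x).

Definition squarefree (d : nat) : Prop := forall p, prime p -> ~~ (p * p %| d)%N.
Definition real_quadratic (d : nat) : Prop := (1 < d)%N /\ squarefree d.

(* O_K = Z + omega Z *)
Definition omega (d : nat) : qf :=
  if (d %% 4 == 1)%N then (1 / 2, 1 / 2) else (0, 1).

Definition lat := qf -> Prop.
Definition lat_eq (L1 L2 : lat) : Prop := forall x, L1 x <-> L2 x.
Definition subl (L1 L2 : lat) : Prop := forall x, L1 x -> L2 x.

Definition span2 (e1 e2 : qf) : lat :=
  fun x => exists m n : int, x = kadd (kscale m e1) (kscale n e2).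

Definition is_lattice (L : lat) : Prop :=
  exists e1 e2 : qf,
    (forall m n : int, kadd (kscale m e1) (kscale n e2) = kzero -> m = 0 /\ n = 0)
    /\ lat_eq L (span2 e1 e2).

(* the order O_k = Z + k omega Z of conductor k *)
Definition order_of (d k : nat) : lat := span2 kone (kscale k%:Z (omega d)).

Definition End_lat (d : nat) (L : lat) : lat :=
  fun l => forall x, L x -> L (kmul d l x).
Definition inv_lat (d : nat) (L : lat) : lat :=
  fun l => forall x, L x -> End_lat d L (kmul d l x).

Definition is_ideal (d : nat) (O L : lat) : Prop :=
  is_lattice L /\ forall a x, O a -> L x -> L (kmul d a x).
(* O-invertible O-ideal: endomorphism ring equal to O *)
Definition invertible (d : nat) (O L : lat) : Prop :=
  is_ideal d O L /\ lat_eq (End_lat d L) O.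

Definition lsum (L1 L2 : lat) : lat :=
  fun x => exists y z, L1 y /\ L2 z /\ x = kadd y z.
Definition lcap (L1 L2 : lat) : lat := fun x => L1 x /\ L2 x.
Definition lmul (d : nat) (L1 L2 : lat) : lat :=
  fun x => exists s : seq (qf * qf),
    (forall p, p \in s -> L1 p.1 /\ L2 p.2) /\
    x = foldr kadd kzero (map (fun p => kmul d p.1 p.2) s).
Definition lscale (d : nat) (c : qf) (L : lat) : lat :=
  fun x => exists y, L y /\ x = kmul d c y.
Definition int_ideal (d g : nat) (O : lat) : lat := lscale d (g%:R, 0) O.

Definition IO (d : nat) (O g : lat) (b : lat) : Prop :=
  invertible d O b /\ subl b O /\ lat_eq (lsum b g) O.

Definition equiv_mod (d g : nat) (L1 L2 : lat) : Prop :=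
  exists l : qf, totally_positive d l /\
    (exists mu, inv_lat d L1 mu /\ l = kadd (kscale g%:Z mu) kone) /\
    lat_eq (lscale d l L1) L2.

(* Main.v *)
Require Import Defs.
From mathcomp Require Import all_boot all_order all_algebra all_field.
From mathcomp Require Import ring lra zify.
From Stdlib Require Import Classical.
Set Implicit Arguments. Unset Strict Implicit. Unset Printing Implicit Defensive.
Import Order.TTheory GRing.Theory Num.Theory.
Local Open Scope ring_scope.
Set Implicit Arguments. Unset Strict Implicit. Unset Printing Implicit Defensive.
Import Order.TTheory GRing.Theory Num.Theory.
Local Open Scope ring_scope.

Ltac qfeq := rewrite /kadd /kmul /kscale /kone /kzero /kconj /=;
  apply: injective_projections => /=; ring.

Definition wt (d : nat) : int := if (d %% 4 == 1)%N then 1 else 0.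
Definition ws (d : nat) : int := if (d %% 4 == 1)%N then ((d - 1) %/ 4)%N%:Z else d%:Z.
Definition uu (d : nat) (x : qf) : rat := x.2 / (omega d).2.
Definition vv (d : nat) (x : qf) : rat := x.1 - uu d x * (omega d).1.
Definition isZ (r : rat) := exists z : int, r = z%:~R.

Section Alg.
Variable d : nat.
Implicit Types x y z : qf.
Lemma kaddC x y : kadd x y = kadd y x. Proof. qfeq. Qed.
Lemma kaddA x y z : kadd x (kadd y z) = kadd (kadd x y) z. Proof. qfeq. Qed.
Lemma kmulC x y : kmul d x y = kmul d y x. Proof. qfeq. Qed.
Lemma kmulA x y z : kmul d x (kmul d y z) = kmul d (kmul d x y) z. Proof. qfeq. Qed.
Lemma kmulDr x y z : kmul d x (kadd y z) = kadd (kmul d x y) (kmul d x z). Proof. qfeq. Qed.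
Lemma kmulDl x y z : kmul d (kadd y z) x = kadd (kmul d y x) (kmul d z x). Proof. qfeq. Qed.
Lemma kscale_mulr (k : int) x y : kmul d x (kscale k y) = kscale k (kmul d x y). Proof. qfeq. Qed.
Lemma kscale_mull (k : int) x y : kmul d (kscale k x) y = kscale k (kmul d x y). Proof. qfeq. Qed.
Lemma kscaleA (a b : int) x : kscale a (kscale b x) = kscale (a * b) x.
Proof. rewrite /kscale /=; apply: injective_projections => /=; rewrite intrM; ring. Qed.
Lemma kscaleDr (a : int) x y : kscale a (kadd x y) = kadd (kscale a x) (kscale a y). Proof. qfeq. Qed.
Lemma kscaleDl (a b : int) x : kscale (a + b) x = kadd (kscale a x) (kscale b x).
Proof. rewrite /kscale /kadd /=; apply: injective_projections => /=; rewrite intrD; ring. Qed.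
Lemma kscale1 x : kscale 1 x = x. Proof. by case: x => a b; rewrite /kscale /= !mul1r. Qed.
Lemma kscale0 x : kscale 0 x = kzero. Proof. by rewrite /kscale /= !mul0r. Qed.
Lemma kscalez (a : int) : kscale a kzero = kzero. Proof. by rewrite /kscale /= !mulr0. Qed.
Lemma kmul1 x : kmul d kone x = x. Proof. case: x => a b; qfeq. Qed.
Lemma kmul1r x : kmul d x kone = x. Proof. case: x => a b; qfeq. Qed.
Lemma kmul0 x : kmul d kzero x = kzero. Proof. qfeq. Qed.
Lemma kmul0r x : kmul d x kzero = kzero. Proof. qfeq. Qed.
Lemma kadd0 x : kadd kzero x = x. Proof. case: x => a b; qfeq. Qed.
Lemma kadd0r x : kadd x kzero = x. Proof. case: x => a b; qfeq. Qed.
Lemma kaddN x : kadd x (kscale (-1) x) = kzero. Proof. qfeq. Qed.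
Lemma kconjM x y : kconj (kmul d x y) = kmul d (kconj x) (kconj y). Proof. qfeq. Qed.
Lemma kconjD x y : kconj (kadd x y) = kadd (kconj x) (kconj y). Proof. qfeq. Qed.
Lemma kconjZ (a : int) x : kconj (kscale a x) = kscale a (kconj x). Proof. qfeq. Qed.
Lemma kconjK x : kconj (kconj x) = x. Proof. case: x => a b; rewrite /kconj /= opprK. by []. Qed.

Lemma omega2_ne0 : (omega d).2 != 0.
Proof. by rewrite /omega; case: ifP. Qed.

Lemma uv_eq x y : uu d x = uu d y -> vv d x = vv d y -> x = y.
Proof.
rewrite /vv => hu; rewrite hu => hv.
have h1 : x.1 = y.1 by move: hv => /eqP; rewrite (inj_eq (addIr _)) => /eqP.
have h2 : x.2 = y.2.
  by move: hu; rewrite /uu => /(congr1 (fun r => r * (omega d).2)); rewrite !divfK ?omega2_ne0.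
by apply: injective_projections.
Qed.

Lemma d_mod4 : (d %% 4 == 1)%N -> d%:R = 4 * ((d - 1) %/ 4)%N%:R + 1 :> rat.
Proof.
move=> /eqP h; have e := divn_eq d 4; rewrite h in e.
have -> : ((d - 1) %/ 4 = d %/ 4)%N by rewrite {1}e addnK mulnK.
by rewrite {1}e natrD natrM mulrC.
Qed.

Lemma uD x y : uu d (kadd x y) = uu d x + uu d y. Proof. by rewrite /uu /= mulrDl. Qed.
Lemma vD x y : vv d (kadd x y) = vv d x + vv d y. Proof. rewrite /vv uD /=; ring. Qed.
Lemma uZ (a : int) x : uu d (kscale a x) = a%:~R * uu d x. Proof. by rewrite /uu /= mulrA. Qed.
Lemma vZ (a : int) x : vv d (kscale a x) = a%:~R * vv d x. Proof. rewrite /vv uZ /=; ring. Qed.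
Lemma u1 : uu d kone = 0. Proof. by rewrite /uu /= mul0r. Qed.
Lemma v1 : vv d kone = 1. Proof. by rewrite /vv u1 mul0r subr0. Qed.
Lemma u0 : uu d kzero = 0. Proof. by rewrite /uu /= mul0r. Qed.
Lemma v0 : vv d kzero = 0. Proof. by rewrite /vv u0 mul0r subr0. Qed.
Lemma uw : uu d (omega d) = 1. Proof. by rewrite /uu divff ?omega2_ne0. Qed.
Lemma vw : vv d (omega d) = 0. Proof. by rewrite /vv uw mul1r subrr. Qed.
Lemma uR (r : rat) : uu d (r, 0) = 0. Proof. by rewrite /uu /= mul0r. Qed.
Lemma vR (r : rat) : vv d (r, 0) = r. Proof. by rewrite /vv uR mul0r subr0. Qed.

Lemma uM x y : uu d (kmul d x y) =
  vv d x * uu d y + uu d x * vv d y + (wt d)%:~R * uu d x * uu d y.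
Proof.
rewrite /vv /uu /wt /omega /kmul /=; case: ifP => h /=; by field.
Qed.
Lemma vM x y : vv d (kmul d x y) = vv d x * vv d y + (ws d)%:~R * uu d x * uu d y.
Proof.
rewrite /vv /uu /ws /omega /kmul /=; case: ifP => h /=.
  rewrite (d_mod4 h) pmulrn; by field.
by rewrite pmulrn; field.
Qed.
Lemma uC x : uu d (kconj x) = - uu d x. Proof. by rewrite /uu /= mulNr. Qed.
Lemma vC x : vv d (kconj x) = vv d x + (wt d)%:~R * uu d x.
Proof. rewrite /vv /uu /wt /omega /=; case: ifP => h /=; by field. Qed.
End Alg.
Set Implicit Arguments. Unset Strict Implicit. Unset Printing Implicit Defensive.
Import Order.TTheory GRing.Theory Num.Theory.
Local Open Scope ring_scope.

Section Ord.
Variable d : nat.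
Implicit Types x y z : qf.

Lemma Ouv k x : order_of d k x <->
  exists i j : int, vv d x = i%:~R /\ uu d x = (k%:Z * j)%:~R.
Proof.
split.
  case=> i [j ->]; exists i, j.
  rewrite vD uD !vZ !uZ v1 u1 vw uw; split; rewrite ?intrM; ring.
case=> i [j [hv hu]]; exists i, j; apply: (uv_eq (d:=d)).
  by rewrite uD !uZ u1 uw hu intrM; ring.
by rewrite vD !vZ v1 vw hv; ring.
Qed.

Lemma OD k x y : order_of d k x -> order_of d k y -> order_of d k (kadd x y).
Proof.
move=> /Ouv [i [j [h1 h2]]] /Ouv [i' [j' [h1' h2']]]; apply/Ouv.
exists (i + i'), (j + j'); rewrite vD uD h1 h2 h1' h2' !intrD !intrM; split; ring.
Qed.

Lemma OZ k (a : int) x : order_of d k x -> order_of d k (kscale a x).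
Proof.
move=> /Ouv [i [j [h1 h2]]]; apply/Ouv.
exists (a * i), (a * j); rewrite vZ uZ h1 h2 !intrM; split; ring.
Qed.

Lemma O1 k : order_of d k kone.
Proof. by apply/Ouv; exists 1, 0; rewrite v1 u1 mulr0. Qed.

Lemma O0 k : order_of d k kzero.
Proof. by apply/Ouv; exists 0, 0; rewrite v0 u0 mulr0. Qed.

Lemma OR k (a : int) : order_of d k (a%:~R, 0).
Proof. by apply/Ouv; exists a, 0; rewrite vR uR mulr0. Qed.

Lemma OW k : order_of d k (kscale k%:Z (omega d)).
Proof. by apply/Ouv; exists 0, 1; rewrite vZ uZ vw uw; split; rewrite ?intrM; ring. Qed.

Lemma OM k x y : order_of d k x -> order_of d k y -> order_of d k (kmul d x y).
Proof.
move=> /Ouv [i [j [h1 h2]]] /Ouv [i' [j' [h1' h2']]]; apply/Ouv.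
exists (i * i' + ws d * (k%:Z * j) * (k%:Z * j')),
  (i * j' + j * i' + wt d * j * (k%:Z * j')).
rewrite vM uM h1 h2 h1' h2'; split; rewrite ?intrD ?intrM; ring.
Qed.

Lemma OC k x : order_of d k x -> order_of d k (kconj x).
Proof.
move=> /Ouv [i [j [h1 h2]]]; apply/Ouv.
exists (i + wt d * (k%:Z * j)), (- j).
rewrite vC uC h1 h2; split; rewrite ?intrD ?intrM ?intrN; ring.
Qed.

Lemma Osub n m x : order_of d (n * m) x -> order_of d m x.
Proof.
move=> /Ouv [i [j [h1 h2]]]; apply/Ouv.
exists i, (n%:Z * j); rewrite h1 h2 PoszM; split=> //; congr intr; ring.
Qed.

Lemma On n m x : order_of d m x -> order_of d (n * m) (kscale n%:Z x).
Proof.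
move=> /Ouv [i [j [h1 h2]]]; apply/Ouv.
exists (n%:Z * i), j; rewrite vZ uZ h1 h2 PoszM -!intrM; split=> //; congr intr; ring.
Qed.

Lemma Odec n m x : order_of d m x -> exists y (j : int),
  order_of d (n * m) y /\ x = kadd y (kscale j (kscale m%:Z (omega d))).
Proof.
case=> i [j ->]; exists (kscale i kone), j; split=> //.
exact/OZ/O1.
Qed.

Lemma ON k x : order_of d k x -> order_of d k (kscale (-1) x).
Proof. exact: OZ. Qed.

End Ord.
Set Implicit Arguments. Unset Strict Implicit. Unset Printing Implicit Defensive.
Import Order.TTheory GRing.Theory Num.Theory.
Local Open Scope ring_scope.

Ltac qfeqz := rewrite /kadd /kmul /kscale /kone /kzero /kconj /=;
  apply: injective_projections => /=; rewrite ?(PoszM, intrD, intrM, intrN, intrB, mulrz_nat); ring.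

Definition lc (e1 e2 : qf) (i j : int) := kadd (kscale i e1) (kscale j e2).
Definition indep (e1 e2 : qf) := forall m n : int,
  kadd (kscale m e1) (kscale n e2) = kzero -> m = 0 /\ n = 0.
Definition zclosed (L : lat) := L kzero /\ (forall x y, L x -> L y -> L (kadd x y)) /\
  (forall (a : int) x, L x -> L (kscale a x)).

Lemma ex_min_P (P : nat -> Prop) : (exists n, P n) ->
  exists n, P n /\ forall k, P k -> (n <= k)%N.
Proof.
case=> n0 Pn0; elim: n0 {-2}n0 (leqnn n0) Pn0 => [|N IH] n0 hn Pn0.
  by exists n0; split=> // k _; move: hn; rewrite leqn0 => /eqP ->.
case: (classic (exists k, (k < n0)%N /\ P k)) => [[k [hk Pk]]|hno].
  by apply: (IH k) => //; rewrite -ltnS (leq_trans hk hn).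
exists n0; split=> // k Pk; rewrite leqNgt; apply/negP => hk; apply: hno; by exists k.
Qed.

Lemma lc_sub e1 e2 i j i' j' :
  lc e1 e2 (i - i') (j - j') = kadd (lc e1 e2 i j) (kscale (-1) (lc e1 e2 i' j')).
Proof. rewrite /lc; qfeqz. Qed.

Lemma indep_uniq e1 e2 i j i' j' : indep e1 e2 ->
  lc e1 e2 i j = lc e1 e2 i' j' -> i = i' /\ j = j'.
Proof.
move=> hi he; have := hi (i - i') (j - j').
rewrite -/(lc e1 e2 _ _) lc_sub he kaddN => /(_ erefl) [/eqP h1 /eqP h2].
rewrite subr_eq0 in h1; rewrite subr_eq0 in h2; split; exact/eqP.
Qed.

Lemma lattice_zclosed L : is_lattice L -> zclosed L.
Proof.
case=> e1 [e2 [_ hL]]; split; [|split].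
- by apply/hL; exists 0, 0; rewrite !kscale0 kadd0.
- move=> x y /hL [i [j ->]] /hL [i' [j' ->]]; apply/hL; exists (i + i'), (j + j'); qfeqz.
- move=> a x /hL [i [j ->]]; apply/hL; exists (a * i), (a * j); qfeqz.
Qed.

Lemma ord_zclosed d k : zclosed (order_of d k).
Proof. split; [exact: O0|split; [exact: OD|exact: OZ]]. Qed.

Lemma sublattice L M (N : nat) : (0 < N)%N -> is_lattice L -> zclosed M ->
  subl M L -> (forall x, L x -> M (kscale N%:Z x)) -> is_lattice M.
Proof.
move=> N0 [e1 [e2 [hi hL]]] [M0 [MD MZ]] hML hNM.
pose H (i j : int) := M (lc e1 e2 i j).
have HL : forall i j, L (lc e1 e2 i j) by move=> i j; apply/hL; exists i, j.
have HN0 : H N%:Z 0 by rewrite /H; have := hNM _ (HL 1 0); congr M; rewrite /lc; qfeqz.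
have H0N : H 0 N%:Z by rewrite /H; have := hNM _ (HL 0 1); congr M; rewrite /lc; qfeqz.
have HD : forall i j i' j', H i j -> H i' j' -> H (i + i') (j + j').
  move=> i j i' j' h h'; have := MD _ _ h h'; rewrite /H; congr M; rewrite /lc; qfeqz.
have HZ : forall a i j, H i j -> H (a * i) (a * j).
  move=> a i j h; have := MZ a _ h; rewrite /H; congr M; rewrite /lc; qfeqz.
have [a [[ha [b Hab]] amin]] := ex_min_P (P := fun a => (0 < a)%N /\ exists j, H a%:Z j)
  (ex_intro _ N (conj N0 (ex_intro _ 0 HN0))).
have [c [[hc Hc] cmin]] := ex_min_P (P := fun c => (0 < c)%N /\ H 0 c%:Z)
  (ex_intro _ N (conj N0 H0N)).
exists (lc e1 e2 a%:Z b), (lc e1 e2 0 c%:Z); split.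
  move=> p q; rewrite -/(lc _ _ p q).
  have -> : lc (lc e1 e2 a b) (lc e1 e2 0 c) p q = lc e1 e2 (p * a) (p * b + q * c).
    by rewrite /lc; qfeqz.
  have -> : kzero = lc e1 e2 0 0 by rewrite /lc !kscale0 kadd0.
  move=> /indep_uniq -/(_ hi) [/eqP h1 /eqP h2].
  have p0 : p = 0 by move: h1; rewrite mulf_eq0 => /orP [/eqP //|]; lia.
  split=> //; move: h2; rewrite p0 mul0r add0r mulf_eq0 => /orP [/eqP -> //|]; lia.
move=> x; split.
  move=> Mx; have := hML _ Mx => /hL [i [j ex]].
  have Hij : H i j by rewrite /H /lc -ex.
  pose q := (i %/ a%:Z)%Z; pose r := (i %% a%:Z)%Z.
  have a0 : a%:Z != 0 by lia.
  have Hr : H r (j - q * b).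
    have := HD _ _ _ _ Hij (HZ (- q) _ _ Hab); congr H.
      by rewrite /r /q {1}(divz_eq i a%:Z); ring.
    by ring.
  have r0 : r = 0.
    have rge : 0 <= r by exact: modz_ge0.
    case: (boolP (r == 0)) => [/eqP //|rn0].
    have : (a <= `|r|)%N.
      apply: amin; split; first by rewrite absz_gt0.
      by exists (j - q * b); rewrite gez0_abs.
    have hl : r < a%:Z by apply: ltz_pmod; lia.
    lia.
  have Hr' : H 0 (j - q * b) by rewrite -r0.
  pose q' := ((j - q * b) %/ c%:Z)%Z; pose r' := ((j - q * b) %% c%:Z)%Z.
  have c0 : c%:Z != 0 by lia.
  have Hr2 : H 0 r'.
    have := HD _ _ _ _ Hr' (HZ (- q') _ _ Hc); congr H; first by ring.
    by rewrite /r' /q' {1}(divz_eq (j - q * b) c%:Z); ring.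
  have r'0 : r' = 0.
    have rge : 0 <= r' by exact: modz_ge0.
    case: (boolP (r' == 0)) => [/eqP //|rn0].
    have : (c <= `|r'|)%N by apply: cmin; split; [rewrite absz_gt0 | rewrite gez0_abs].
    have hl : r' < c%:Z by apply: ltz_pmod; lia.
    lia.
  exists q, q'; rewrite ex.
  have ei : i = q * a%:Z by rewrite /q {1}(divz_eq i a%:Z) -/r r0 addr0.
  have ej : j = q * b + q' * c%:Z.
    by rewrite -[j](subrK (q * b)) {1}(divz_eq (j - q * b) c%:Z) -/r' r'0 addr0 addrC.
  rewrite ei ej /lc; qfeqz.
case=> p [q ->]; apply: MD; apply: MZ; [exact: Hab|exact: Hc].
Qed.
Set Implicit Arguments. Unset Strict Implicit. Unset Printing Implicit Defensive.
Import Order.TTheory GRing.Theory Num.Theory.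
Local Open Scope ring_scope.

Section Gen.
Variable d : nat.

Lemma kmulRn g x : kmul d (g%:R, 0) x = kscale g%:Z x.
Proof. rewrite /kmul /kscale pmulrn /=; apply: injective_projections => /=; ring. Qed.

Lemma kadd_cancel x y z : x = kadd y z -> y = kadd x (kscale (-1) z).
Proof. move=> ->; qfeqz. Qed.

Lemma kscale_nat (a b : nat) x : kscale (a * b)%N%:Z x = kscale a%:Z (kscale b%:Z x).
Proof. by rewrite kscaleA PoszM. Qed.

Lemma int_idealP g (O0 : lat) z : int_ideal d g O0 z <-> exists y, O0 y /\ z = kscale g%:Z y.
Proof.
split; case=> y [hy ->]; exists y; split=> //; by rewrite kmulRn.
Qed.

Lemma IO_unit k g a : IO d (order_of d k) (int_ideal d g (order_of d k)) a ->
  exists al ga, a al /\ order_of d k ga /\ kone = kadd al (kscale g%:Z ga).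
Proof.
case=> _ [_ hS]; have := (proj2 (hS kone)) (O1 d k).
case=> y [z [ay [/int_idealP [ga [hg ->]] e]]]; by exists y, ga.
Qed.

Lemma lmul_ind (L1 L2 P : lat) : P kzero -> (forall x y, P x -> P y -> P (kadd x y)) ->
  (forall y z, L1 y -> L2 z -> P (kmul d y z)) -> forall x, lmul d L1 L2 x -> P x.
Proof.
move=> P0 PD Pyz x [s [hs ->]]; elim: s hs => [|p s IH] hs //=.
apply: PD; first by case: (hs p (mem_head _ _)) => h1 h2; exact: Pyz.
by apply: IH => q hq; apply: hs; rewrite in_cons hq orbT.
Qed.

Lemma lmul0 L1 L2 : lmul d L1 L2 kzero.
Proof. by exists [::]. Qed.

Lemma lmulD L1 L2 x y : lmul d L1 L2 x -> lmul d L1 L2 y -> lmul d L1 L2 (kadd x y).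
Proof.
case=> [s [hs ->]] [t [ht ->]]; exists (s ++ t); split.
  by move=> p; rewrite mem_cat => /orP [/hs|/ht].
rewrite map_cat foldr_cat; elim: s {hs} => [|p s IH] /=; first by rewrite kadd0.
by rewrite -IH kaddA.
Qed.

Lemma lmul1 (L1 L2 : lat) y z : L1 y -> L2 z -> lmul d L1 L2 (kmul d y z).
Proof. by move=> h1 h2; exists [:: (y, z)]; split; [move=> p; rewrite inE => /eqP -> | rewrite /= kadd0r]. Qed.

End Gen.
Set Implicit Arguments. Unset Strict Implicit. Unset Printing Implicit Defensive.
Import Order.TTheory GRing.Theory Num.Theory.
Local Open Scope ring_scope.

Section PartI.
Variables (d n f m : nat).
Hypotheses (n0 : (0 < n)%N) (f0 : (0 < f)%N).
Local Notation O := (order_of d m).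
Local Notation O' := (order_of d (n * m)).

Lemma nO_O' x : O x -> O' (kscale n%:Z x).
Proof. exact: On. Qed.

Lemma nfO_O' x : O x -> O' (kscale (n * f)%N%:Z x).
Proof. by move=> h; rewrite [(n * f)%N]mulnC kscale_nat; apply: OZ; apply: On. Qed.

Section OneA.
Variable a : lat.
Hypothesis Ha : IO d O (int_ideal d (n * f) O) a.

Let aL : is_lattice a. Proof. by case: Ha => [[[h _] _] _]. Qed.
Let aI : forall al x, O al -> a x -> a (kmul d al x). Proof. by case: Ha => [[[_ h] _] _]. Qed.
Let aE : lat_eq (End_lat d a) O. Proof. by case: Ha => [[_ h] _]. Qed.
Let aO : subl a O. Proof. by case: Ha => [_ [h _]]. Qed.
Let aZ := lattice_zclosed aL.

Lemma theta_cl : zclosed (lcap a O').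
Proof.
case: aZ => [a0 [aD aS]]; case: (ord_zclosed d (n * m)) => [o0 [oD oS]].
split; [by split|split].
  by move=> x y [h1 h2] [h3 h4]; split; [apply: aD|apply: oD].
by move=> k x [h1 h2]; split; [apply: aS|apply: oS].
Qed.

Lemma theta_n x : a x -> lcap a O' (kscale n%:Z x).
Proof. by move=> h; split; [case: aZ => [_ [_ ]]; apply | apply/nO_O'/aO]. Qed.

Lemma theta_lat : is_lattice (lcap a O').
Proof. apply: (sublattice n0 aL theta_cl) => //; [by move=> x []| exact: theta_n]. Qed.

Lemma theta_stable al x : O' al -> lcap a O' x -> lcap a O' (kmul d al x).
Proof. by move=> h [h1 h2]; split; [apply: aI => //; apply: Osub h | apply: OM]. Qed.

Lemma theta_unit : exists al ga, lcap a O' al /\ O ga /\ kone = kadd al (kscale (n * f)%N%:Z ga).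
Proof.
have [al [ga [h1 [h2 h3]]]] := IO_unit Ha.
exists al, ga; split=> //; split=> //.
rewrite (kadd_cancel h3); apply: OD; first exact: O1.
by apply: OZ; apply: nfO_O'.
Qed.

Lemma decomp x al ga g : kone = kadd al (kscale g ga) ->
  x = kadd (kmul d x al) (kscale g (kmul d x ga)).
Proof. move=> e; rewrite -kscale_mulr -kmulDr -e kmul1r //. Qed.

Lemma theta_End : lat_eq (End_lat d (lcap a O')) O'.
Proof.
have [al [ga [[hal hal'] [hga e]]]] := theta_unit.
case: aZ => [a0 [aD aS]].
move=> l; split; last first.
  by move=> hl x hx; apply: theta_stable.
move=> hl.
have hla : O l.
  apply/aE => x hx; rewrite (decomp x e) kmulDr.
  apply: aD.
    rewrite kmulA [kmul d l x]kmulC -kmulA kmulC; apply: aI; last exact hx.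
    by apply: aO; case: (hl al (conj hal hal')).
  rewrite kscale_mulr [(n * f)%N]mulnC kscale_nat; case: (hl _ (theta_n (aS f%:Z _ (aI hga hx)))) => h _.
  suff -> : kscale f%:Z (kscale n%:Z (kmul d l (kmul d x ga))) = kmul d l (kscale n%:Z (kscale f%:Z (kmul d ga x))) by []. qfeqz.
rewrite (decomp l e); apply: OD; first by case: (hl al (conj hal hal')).
by apply: nfO_O'; apply: OM.
Qed.

Lemma theta_IO : IO d O' (int_ideal d f O') (lcap a O').
Proof.
have [al [ga [[hal hal'] [hga e]]]] := theta_unit.
split; first by split; [split; [exact: theta_lat | move=> *; exact: theta_stable] | exact: theta_End].
split; first by move=> x [].
move=> x; split.
  case=> y [z [[_ hy] [/int_idealP [w [hw ->]] ->]]]; apply: OD; [exact: hy | exact: OZ hw].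
move=> hx; rewrite (decomp x e); exists (kmul d x al), (kscale (n * f)%N%:Z (kmul d x ga)).
split; first by apply: theta_stable; [exact: hx | split].
split=> //; apply/int_idealP; exists (kscale n%:Z (kmul d x ga)); split.
  by apply: nO_O'; apply: OM => //; apply: Osub hx.
by rewrite -kscale_nat [(f * n)%N]mulnC.
Qed.

End OneA.

Lemma IO_stab a : IO d O (int_ideal d (n * f) O) a ->
  forall al x, O al -> a x -> a (kmul d al x).
Proof. by case => [[[_ h] _] _]. Qed.

Lemma IO_End a : IO d O (int_ideal d (n * f) O) a -> lat_eq (End_lat d a) O.
Proof. by case => [[_ h] _]. Qed.

Lemma IO_sub a : IO d O (int_ideal d (n * f) O) a -> subl a O.
Proof. by case => [_ [h _]]. Qed.

Lemma theta_mul a a' : IO d O (int_ideal d (n * f) O) a -> IO d O (int_ideal d (n * f) O) a' ->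
  lat_eq (lcap (lmul d a a') O') (lmul d (lcap a O') (lcap a' O')).
Proof.
move=> Ha Ha' x; split; last first.
  apply: lmul_ind.
  - by split; [exact: lmul0 | exact: O0].
  - by move=> y z [h1 h2] [h3 h4]; split; [apply: lmulD | apply: OD].
  - by move=> y z [h1 h2] [h3 h4]; split; [apply: lmul1 | apply: OM].
case=> hx hxO.
have [al [ga [[hal hal'] [hga e]]]] := theta_unit Ha.
have [bl [gb [[hbl hbl'] [hgb e']]]] := theta_unit Ha'.
pose el := kmul d al bl.
pose t1 := kadd (kscale 2 kone) (kscale (-1) el).
pose u := kadd kone (kscale (-1) el).
have ex : x = kadd (kmul d x (kmul d el t1)) (kmul d x (kmul d u u)) by rewrite /t1 /u; qfeqz.
rewrite ex; apply: lmulD.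
  have -> : kmul d x (kmul d el t1) = kmul d (kmul d (kmul d t1 x) al) bl by rewrite /el; qfeqz.
  apply: lmul1; last by split.
  apply: (theta_stable Ha); last by split.
  apply: OM => //; apply: OD; first by apply: OZ; apply: O1.
  by apply: OZ; apply: OM.
pose de := kadd (kscale f%:Z ga) (kadd (kscale f%:Z gb) (kscale (- (n * f * f)%N%:Z) (kmul d ga gb))).
have hde : O de.
  by apply: OD; [exact: OZ | apply: OD; [exact: OZ | apply: OZ; apply: OM]].
have eu : u = kscale n%:Z de.
  rewrite /u /el /de (kadd_cancel e) (kadd_cancel e'); qfeqz.
apply: (lmul_ind (P := fun x => lmul d (lcap a O') (lcap a' O') (kmul d x (kmul d u u)))) hx.
- by rewrite kmul0; apply: lmul0.
- by move=> y z h1 h2; rewrite kmulDl; apply: lmulD.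
move=> y z hy hz.
have -> : kmul d (kmul d y z) (kmul d u u) =
  kmul d (kscale n%:Z y) (kscale n%:Z (kmul d (kmul d de de) z)) by rewrite eu; qfeqz.
apply: lmul1; first exact: theta_n.
apply: theta_n => //; apply: (IO_stab Ha') => //; exact: OM.
Qed.

Lemma theta_equiv a a' : IO d O (int_ideal d (n * f) O) a -> IO d O (int_ideal d (n * f) O) a' ->
  equiv_mod d (n * f) a a' -> equiv_mod d f (lcap a O') (lcap a' O').
Proof.
move=> Ha Ha' [l [tp [[mu [hmu hl]] hsc]]].
have muO : forall y, a y -> O (kmul d mu y).
  move=> y hy; apply/(IO_End Ha); exact: hmu.
have ly : forall y, kmul d l y = kadd (kscale (n * f)%N%:Z (kmul d mu y)) y.
  by move=> y; rewrite hl; qfeqz.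
exists l; split=> //; split.
  exists (kscale n%:Z mu); split.
    move=> x hx; apply/(theta_End Ha); rewrite kscale_mull; apply: nO_O'; apply: muO; by case: hx.
  by rewrite hl kscaleA -PoszM mulnC.
move=> x; split.
  case=> y [[ya yO] ->]; split; first by apply/hsc; exists y.
  by rewrite ly; apply: OD => //; apply: nfO_O'; exact: muO.
case=> xa xO; have [y [ya ex]] := (proj2 (hsc x)) xa; rewrite ex in xO xa *.
exists y; split=> //; split=> //.
have -> : y = kadd (kmul d l y) (kscale (-1) (kscale (n * f)%N%:Z (kmul d mu y))).
  by rewrite ly; qfeqz.
by apply: OD => //; apply: OZ; apply: nfO_O'; exact: muO.
Qed.

End PartI.
Set Implicit Arguments. Unset Strict Implicit. Unset Printing Implicit Defensive.
Import Order.TTheory GRing.Theory Num.Theory.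
Local Open Scope ring_scope.

Section Inv.
Variable d : nat.
Definition kn (x : qf) : rat := x.1 ^+ 2 - d%:R * x.2 ^+ 2.
Definition kinv (x : qf) : qf := (x.1 / kn x, - x.2 / kn x).

Lemma kmulV x : kn x != 0 -> kmul d x (kinv x) = kone.
Proof.
move=> h; rewrite /kmul /kinv /kone /=; apply: injective_projections => /=.
  by move: h; rewrite /kn => h; field.
by move: h; rewrite /kn => h; field.
Qed.

Lemma kcancel nu x y : kn nu != 0 -> kmul d nu x = kmul d nu y -> x = y.
Proof.
move=> h e.
have : kmul d (kinv nu) (kmul d nu x) = kmul d (kinv nu) (kmul d nu y) by rewrite e.
by rewrite !kmulA [kmul d (kinv nu) nu]kmulC kmulV // !kmul1.
Qed.

Lemma kembM x y : kemb d (kmul d x y) = kemb d x * kemb d y.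
Proof.
rewrite /kemb /kmul /= !rmorphD !rmorphM /= ratr_nat.
have hs := sqrtCK (d%:R : algC); set s := sqrtC _ in hs *.
by rewrite -hs; ring.
Qed.

Lemma kembD x y : kemb d (kadd x y) = kemb d x + kemb d y.
Proof. rewrite /kemb /kadd /= !rmorphD /=; ring. Qed.

Lemma kemb1 : kemb d kone = 1.
Proof. by rewrite /kemb /kone /= rmorph1 rmorph0 mul0r addr0. Qed.

Lemma kembZ (z : int) x : kemb d (kscale z x) = z%:~R * kemb d x.
Proof. rewrite /kemb /kscale /= !rmorphM /= !ratr_int; ring. Qed.

Lemma kemb_kn x : kemb d x * kemb d (kconj x) = ratr (kn x).
Proof.
rewrite -kembM /kemb /kn /kmul /kconj /=.
have -> : x.1 * - x.2 + x.2 * x.1 = 0 by ring.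
rewrite rmorph0 mul0r addr0; congr ratr; ring.
Qed.

Lemma tp_kn x : totally_positive d x -> kn x != 0.
Proof.
case=> h1 h2; have := mulr_gt0 h1 h2; rewrite kemb_kn ltr0q => h.
by rewrite gt_eqF.
Qed.

Lemma tpM x y : totally_positive d x -> totally_positive d y -> totally_positive d (kmul d x y).
Proof.
case=> h1 h2 [h3 h4]; split; first by rewrite kembM mulr_gt0.
by rewrite kconjM kembM mulr_gt0.
Qed.

Lemma tp_inv x : totally_positive d x -> totally_positive d (kinv x).
Proof.
move=> tx; have hn := tp_kn tx; case: tx => h1 h2.
have e1 : kemb d (kinv x) * kemb d x = 1 by rewrite -kembM kmulC kmulV // kemb1.
have e2 : kemb d (kconj (kinv x)) * kemb d (kconj x) = 1.
  by rewrite -kembM -kconjM kmulC kmulV // kemb1.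
split.
  have -> : kemb d (kinv x) = (kemb d x)^-1 by rewrite -[LHS]mulr1 -(mulfV (lt0r_neq0 h1)) mulrA e1 mul1r.
  by rewrite invr_gt0.
have -> : kemb d (kconj (kinv x)) = (kemb d (kconj x))^-1.
  by rewrite -[LHS]mulr1 -(mulfV (lt0r_neq0 h2)) mulrA e2 mul1r.
by rewrite invr_gt0.
Qed.

Lemma tp1 : totally_positive d kone.
Proof. by split; rewrite ?kemb1 // /kconj /kone /= oppr0 kemb1. Qed.

Lemma emb_pos (a b : rat) (s : algC) : 0 <= s -> s <= (d.+1)%:R ->
  `|b| * (d.+1)%:R < a -> 0 < ratr a + ratr b * s.
Proof.
move=> s0 s1 hab.
have -> : ratr a + ratr b * s = (ratr (a - `|b| * (d.+1)%:R) : algC) +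
   (ratr `|b| * ((d.+1)%:R - s) + ratr (b + `|b|) * s).
  by rewrite rmorphB rmorphD /= rmorphM /= ratr_nat; ring.
apply: ltr_pwDl; first by rewrite ltr0q subr_gt0.
apply: addr_ge0; apply: mulr_ge0; rewrite ?ler0q ?subr_ge0 //.
have : - b <= `|b| by rewrite ler_normr lexx orbT.
lra.
Qed.

Lemma sqrtC_le : sqrtC (d%:R : algC) <= (d.+1)%:R.
Proof.
rewrite -[X in _ <= X](@sqrCK _ ((d.+1)%:R)) ?ler0n //.
rewrite ler_sqrtC ?qualifE /= ?ler0n ?exprn_ge0 ?ler0n //.
by rewrite -natrX ler_nat; nia.
Qed.

Lemma tp_shift nu (M : nat) : (0 < M)%N -> exists k : nat,
  totally_positive d (kadd nu (kscale (M * k)%N%:Z kone)).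
Proof.
move=> M0.
pose B := Num.bound (`|nu.1| + `|nu.2| * (d.+1)%:R).
have hB : `|nu.1| + `|nu.2| * (d.+1)%:R < B%:R.
  by apply: archi_boundP; apply: addr_ge0; rewrite ?mulr_ge0 ?ler0n.
have hMB : (B%:R : rat) <= (M * B)%N%:R by rewrite ler_nat leq_pmull.
have h1 : - nu.1 <= `|nu.1| by rewrite ler_normr lexx orbT.
have h2 : nu.1 <= `|nu.1| by rewrite ler_normr lexx.
have s0 : 0 <= sqrtC (d%:R : algC) by rewrite sqrtC_ge0 ler0n.
exists B; rewrite /totally_positive /kemb /kadd /kscale /kone /kconj /= pmulrn mulr1 mulr0 addr0.
split; apply: emb_pos => //; try exact: sqrtC_le; rewrite ?normrN; lra.
Qed.
End Inv.
Set Implicit Arguments. Unset Strict Implicit. Unset Printing Implicit Defensive.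
Import Order.TTheory GRing.Theory Num.Theory.
Local Open Scope ring_scope.

Section GI.
Variables (d K : nat).
Local Notation O := (order_of d K).

Definition GI (c : lat) := is_lattice c /\ (forall al x, O al -> c x -> c (kmul d al x)) /\
  lat_eq (End_lat d c) O /\ subl c O.
Definition ucop (c : lat) (q : nat) := exists al ga, c al /\ O ga /\ kone = kadd al (kscale q%:Z ga).
Definition cong (nu : qf) (c : lat) (g : nat) := forall x, c x -> exists z, O z /\
  kadd x (kscale (-1) (kmul d nu x)) = kscale g%:Z z.

Lemma IO_GI c g : IO d O (int_ideal d g O) c <-> GI c /\ ucop c g.
Proof.
split.
  move=> H; have [al [ga [h1 [h2 h3]]]] := IO_unit H.
  case: H => [[[hl hs] he] [hsub _]]; split; first by split=> //; split.
  by exists al, ga.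
case=> [[hl [hs [he hsub]]] [al [ga [h1 [h2 h3]]]]]; split; first by [].
split=> // x; split.
  case=> y [z [hy [/int_idealP [w [hw ->]] ->]]]; apply: OD; [exact: hsub | exact: OZ].
move=> hx; exists (kmul d x al), (kscale g%:Z (kmul d x ga)); split.
  by apply: hs.
split; first by apply/int_idealP; exists (kmul d x ga); split=> //; apply: OM.
by rewrite -kscale_mulr -kmulDr -h3 kmul1r.
Qed.

Lemma lattice_scale L ka : is_lattice L -> kn d ka != 0 -> is_lattice (lscale d ka L).
Proof.
case=> e1 [e2 [hi hL]] hk; exists (kmul d ka e1), (kmul d ka e2); split.
  move=> i j; rewrite -!kscale_mulr -kmulDr => e.
  apply: hi; apply: (kcancel hk); by rewrite e kmul0r.
move=> x; split.
  case=> y [/hL [i [j ->]] ->]; exists i, j; by rewrite kmulDr !kscale_mulr.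
case=> i [j ->]; exists (kadd (kscale i e1) (kscale j e2)); split.
  by apply/hL; exists i, j.
by rewrite kmulDr !kscale_mulr.
Qed.

Lemma GI_scale c nu : GI c -> kn d nu != 0 -> (forall x, c x -> O (kmul d nu x)) ->
  GI (lscale d nu c).
Proof.
case=> hl [hs [he hsub]] hk hO; split; first exact: lattice_scale.
have st : forall al x, O al -> lscale d nu c x -> lscale d nu c (kmul d al x).
  move=> al x ha [y [hy ->]]; exists (kmul d al y); split; first exact: hs.
  by rewrite !kmulA [kmul d al nu]kmulC.
split=> //; split; last by move=> x [y [hy ->]]; apply: hO.
move=> l; split; last by move=> hl' x hx; apply: st.
move=> hl'; apply/he => y hy.
have [y' [hy' e]] := hl' (kmul d nu y) (ex_intro _ y (conj hy erefl)).
suff -> : kmul d l y = y' by [].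
apply: (kcancel hk); by rewrite -e !kmulA [kmul d l nu]kmulC.
Qed.

Lemma GI_lat c : GI c -> is_lattice c.
Proof. by case. Qed.

Lemma GI_zclosed c : GI c -> zclosed c.
Proof. by case=> hl _; apply: lattice_zclosed. Qed.

Lemma ucop_mul c a b : GI c -> ucop c a -> ucop c b -> ucop c (a * b).
Proof.
move=> hc [al [ga [h1 [h2 e1]]]] [bl [gb [h3 [h4 e2]]]].
have [c0 [cD cZ]] := GI_zclosed hc; case: hc => _ [hs _].
exists (kadd al (kscale a%:Z (kmul d ga bl))), (kmul d ga gb); split.
  by apply: cD => //; apply: cZ; apply: hs.
split; first exact: OM.
have -> : kone = kadd al (kscale a%:Z (kmul d ga (kadd bl (kscale b%:Z gb)))) by rewrite -e2 kmul1r.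
qfeqz.
Qed.

Lemma ucop_cong c nu q r : GI c -> ucop c q -> cong nu c (q * r) -> ucop (lscale d nu c) q.
Proof.
move=> hc [al [ga [h1 [h2 e1]]]] hcg.
have [z [hz ez]] := hcg _ h1.
exists (kmul d nu al), (kadd ga (kscale r%:Z z)); split; first by exists al.
split; first by apply: OD => //; apply: OZ.
move: ez; rewrite PoszM => ez.
have eal : al = kadd (kmul d nu al) (kscale (q%:Z * r%:Z) z) by rewrite -ez; qfeqz.
rewrite e1 {1}eal; qfeqz.
Qed.

Lemma cong_in c nu g : GI c -> cong nu c g -> forall x, c x -> O (kmul d nu x).
Proof.
case=> _ [_ [_ hsub]] hcg x hx; have [z [hz ez]] := hcg _ hx.
have -> : kmul d nu x = kadd x (kscale (-1) (kscale g%:Z z)) by rewrite -ez; qfeqz.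
by apply: OD; [exact: hsub | apply: OZ; apply: OZ].
Qed.

Lemma ucop1 c : GI c -> ucop c 1.
Proof.
move=> hc; have [c0 _] := GI_zclosed hc.
exists kzero, kone; split=> //; split; first exact: O1.
by rewrite kscale1 kadd0.
Qed.

End GI.
Set Implicit Arguments. Unset Strict Implicit. Unset Printing Implicit Defensive.
Import Order.TTheory GRing.Theory Num.Theory.
Local Open Scope ring_scope.

Ltac uvs := rewrite ?(uM, vM, uC, vC, uD, vD, uZ, vZ, uR, vR, u1, v1, uw, vw, u0, v0).

Section Step.
Variables (d K : nat).
Hypothesis K0 : (0 < K)%N.
Local Notation O := (order_of d K).
Local Notation w := (kscale K%:Z (omega d)).

Lemma K0r : (K%:R : rat) != 0. Proof. by rewrite pnatr_eq0 -lt0n. Qed.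

Definition det (x y : qf) : rat := (vv d x * uu d y - uu d x * vv d y) / K%:R.

Lemma det_lc e1 e2 i j i' j' :
  det (lc e1 e2 i j) (lc e1 e2 i' j') = (i * j' - j * i')%:~R * det e1 e2.
Proof. rewrite /det /lc; uvs; rewrite !(intrD, intrM, intrB); by field; rewrite K0r. Qed.

Lemma uw' : uu d w = K%:R. Proof. by uvs; rewrite mulr1 pmulrn. Qed.
Lemma vw' : vv d w = 0. Proof. by uvs; rewrite mulr0. Qed.

Lemma Oint x : O x -> exists i j : int, vv d x = i%:~R /\ uu d x = K%:R * j%:~R.
Proof. by move=> /Ouv [i [j [h1 h2]]]; exists i, j; rewrite h1 h2 intrM pmulrn. Qed.

Lemma intO (i j : int) x : vv d x = i%:~R -> uu d x = K%:R * j%:~R -> O x.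
Proof. by move=> h1 h2; apply/Ouv; exists i, j; rewrite h1 h2 intrM pmulrn. Qed.

Variable c : lat.
Hypothesis hc : GI d K c.
Variables e1 e2 : qf.
Hypothesis hi : indep e1 e2.
Hypothesis hL : lat_eq c (span2 e1 e2).
Let Dq := det e1 e2.

Lemma e1O : O e1.
Proof. by case: hc => _ [_ [_ hs]]; apply: hs; apply/hL; exists 1, 0; rewrite kscale1 kscale0 kadd0r. Qed.
Lemma e2O : O e2.
Proof. by case: hc => _ [_ [_ hs]]; apply: hs; apply/hL; exists 0, 1; rewrite kscale1 kscale0 kadd0. Qed.

Lemma Dq0 : Dq != 0.
Proof.
apply/eqP => h0.
have [a1 [b1 [ha1 hb1]]] := Oint e1O; have [a2 [b2 [ha2 hb2]]] := Oint e2O.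
have hk := K0r.
have h0' : a1%:~R * b2%:~R - b1%:~R * a2%:~R = 0 :> rat.
  move: h0; rewrite /Dq /det ha1 hb1 ha2 hb2 => h0.
  have : (a1%:~R * (K%:R * b2%:~R) - K%:R * b1%:~R * a2%:~R) / K%:R * K%:R = 0 :> rat by rewrite h0 mul0r.
  rewrite divfK // => h; apply: (mulfI hk); rewrite mulr0 -h; ring.
have [hb2' hb1'] : b2 = 0 /\ - b1 = 0.
  apply: hi; apply: (uv_eq (d:=d)); uvs; rewrite ?ha1 ?hb1 ?ha2 ?hb2 ?intrN.
    ring.
  by rewrite -h0'; ring.
have hb1'' : b1 = 0 by rewrite -[b1]opprK hb1' oppr0.
have [ha2' ha1'] : a2 = 0 /\ - a1 = 0.
  apply: hi; apply: (uv_eq (d:=d)); uvs; rewrite ?ha1 ?hb1 ?ha2 ?hb2 ?hb2' ?hb1'' ?intrN.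
    ring.
  ring.
have ha1'' : a1 = 0 by rewrite -[a1]opprK ha1' oppr0.
have e10 : e1 = kzero.
  by apply: (uv_eq (d:=d)); rewrite ?u0 ?v0 ?ha1 ?hb1 ?ha1'' ?hb1'' ?mulr0.
have := @hi 1 0; rewrite e10 kscalez kscale0 kadd0 => /(_ erefl) [h _].
by move: h.
Qed.

Lemma c_lc x : c x -> exists i j, x = lc e1 e2 i j.
Proof. by move=> /hL. Qed.
Lemma lc_c i j : c (lc e1 e2 i j).
Proof. by apply/hL; exists i, j. Qed.
Lemma cO x : c x -> O x.
Proof. by case: hc => _ [_ [_ hs]]; apply: hs. Qed.
Lemma c_st al x : O al -> c x -> c (kmul d al x).
Proof. by case: hc => _ [hs _]; apply: hs. Qed.
Lemma c_zc : zclosed c.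
Proof. exact: GI_zclosed hc. Qed.

Lemma DqZ : exists Dz : int, Dq = Dz%:~R /\ c (Dq, 0).
Proof.
have [a1 [b1 [ha1 hb1]]] := Oint e1O; have [a2 [b2 [ha2 hb2]]] := Oint e2O.
have hk := K0r.
have eD : Dq = (a1 * b2 - b1 * a2)%:~R.
  by rewrite /Dq /det ha1 hb1 ha2 hb2 intrB !intrM; field.
exists (a1 * b2 - b1 * a2); split=> //.
have -> : (Dq, 0) = lc e1 e2 b2 (- b1); last exact: lc_c.
apply: (uv_eq (d:=d)); rewrite /lc; uvs; rewrite ?ha1 ?hb1 ?ha2 ?hb2 ?eD ?intrN ?intrB ?intrM; ring.
Qed.

Lemma det_in x y : c x -> c y -> exists k : int, det x y = k%:~R * Dq.
Proof.
move=> /c_lc [i [j ->]] /c_lc [i' [j' ->]]; exists (i * j' - j * i'); exact: det_lc.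
Qed.

Lemma uS x y : uu d (kmul d (kconj x) y) = K%:R * det x y.
Proof. rewrite /det; uvs; by field; rewrite K0r. Qed.

Lemma vS x y : vv d (kmul d (kconj x) y) = det x (kmul d w y) - (wt d)%:~R * K%:R * det x y.
Proof. rewrite /det; uvs; rewrite ?pmulrn; by field; rewrite K0r. Qed.

Lemma uRM (r : rat) x : uu d (kmul d (r, 0) x) = r * uu d x.
Proof. by uvs; ring. Qed.
Lemma vRM (r : rat) x : vv d (kmul d (r, 0) x) = r * vv d x.
Proof. by uvs; ring. Qed.

Lemma sigma_in x y : c x -> c y -> exists z, O z /\ kmul d (kconj x) y = kmul d (Dq, 0) z.
Proof.
move=> hx hy.
have hwy : c (kmul d w y) by apply: c_st => //; exact: OW.
have [k1 hk1] := det_in hx hy; have [k2 hk2] := det_in hx hwy.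
have hD := Dq0.
exists (kmul d (Dq^-1, 0) (kmul d (kconj x) y)); split.
  apply: (@intO (k2 - wt d * K%:Z * k1) k1).
    rewrite vRM vS hk1 hk2 !intrB !intrM pmulrn; by field.
  by rewrite uRM uS hk1; field.
rewrite /kmul /=; apply: injective_projections => /=; by field.
Qed.

Definition qn x := vv d (kmul d (kconj x) x) / Dq.
Definition trq x := vv d (kadd x (kconj x)).

Lemma qn_int x : c x -> exists k : int, qn x = k%:~R.
Proof.
move=> hx; have [z [hz e]] := sigma_in hx hx.
have [i [j [hi' hj]]] := Oint hz; exists i.
by rewrite /qn e vRM hi'; field; rewrite Dq0.
Qed.

Lemma trq_int x : O x -> exists k : int, trq x = k%:~R.
Proof.
move=> /Oint [i [j [hi' hj]]]; exists (2 * i + wt d * K%:Z * j).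
rewrite /trq; uvs; rewrite hi' hj ?(intrB, intrD, intrM, intrN, pmulrn); ring.
Qed.

Lemma nO_int x : O x -> exists k : int, vv d (kmul d (kconj x) x) = k%:~R.
Proof.
move=> /Oint [i [j [hi' hj]]]; exists ((i + wt d * K%:Z * j) * i - ws d * (K%:Z * j) * (K%:Z * j)).
uvs; rewrite hi' hj ?(intrB, intrD, intrM, intrN, pmulrn); ring.
Qed.

Lemma sxx x : kmul d (kconj x) x = (Dq * qn x, 0).
Proof.
rewrite /qn mulrC divfK ?Dq0 //; apply: (uv_eq (d:=d)); uvs; ring.
Qed.

Lemma id_beta (g : rat) x : qn (kadd (Dq, 0) (kscale (-1) (kmul d (g, 0) x))) =
  Dq - g * trq x + g ^+ 2 * qn x.
Proof. have hD := Dq0; rewrite /qn /trq; uvs; by field. Qed.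

Lemma id_shift x : qn (kadd x (Dq, 0)) = qn x + trq x + Dq.
Proof. have hD := Dq0; rewrite /qn /trq; uvs; by field. Qed.
Lemma id_shift2 x : trq (kadd x (Dq, 0)) = trq x + 2 * Dq.
Proof. rewrite /trq; uvs; ring. Qed.
Lemma id_D : qn (Dq, 0) = Dq.
Proof. have hD := Dq0; rewrite /qn; uvs; by field. Qed.

Lemma id_unit (g : rat) y : vv d (kmul d (kconj (kadd kone (kscale (-1) (kmul d (g, 0) y))))
  (kadd kone (kscale (-1) (kmul d (g, 0) y)))) = 1 - g * trq y + g ^+ 2 * vv d (kmul d (kconj y) y).
Proof. rewrite /trq; uvs; ring. Qed.

Lemma int_eq (a b : int) : (a%:~R : rat) = b%:~R -> a = b.
Proof. by move/eqP; rewrite eqr_int => /eqP. Qed.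

Lemma trqD (r : rat) : trq (r, 0) = 2 * r.
Proof. rewrite /trq; uvs; ring. Qed.
Lemma trq0 : trq kzero = 0.
Proof. rewrite /trq; uvs; ring. Qed.
Lemma qn0 : qn kzero = 0.
Proof. rewrite /qn; uvs; by rewrite !(mulr0, mul0r, addr0, add0r). Qed.

Lemma dvdz_nat (a b : nat) : (a%:Z %| b%:Z)%Z = (a %| b)%N.
Proof. by rewrite dvdzE. Qed.

Lemma key_div (g p : nat) : prime p -> ucop d K c g ->
  (forall x, c x -> forall k : int,
     qn (kadd (Dq, 0) (kscale (-1) (kmul d (g%:R, 0) x))) = k%:~R -> (p%:Z %| k)%Z) ->
  forall x, c x -> forall Q T : int, qn x = Q%:~R -> trq x = T%:~R ->
    (p%:Z %| T)%Z /\ (p%:Z %| Q)%Z.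
Proof.
move=> pp hu H.
have [c0 [cD cZ]] := c_zc.
have [Dz [eDz hDc]] := DqZ.
have pD : (p%:Z %| Dz)%Z.
  apply: (H kzero c0); rewrite id_beta trq0 qn0 eDz; ring.
have png : ~~ (p %| g)%N.
  apply/negP => pg.
  case: hu => al [ga [hal [hga e]]].
  have eal : al = kadd kone (kscale (-1) (kmul d (g%:R, 0) ga)) by rewrite kmulRn; exact: kadd_cancel.
  have [Qa hQa] := qn_int hal.
  have [Tg hTg] := trq_int hga.
  have [Ng hNg] := nO_int hga.
  have ei : Dz * Qa = 1 - g%:Z * Tg + g%:Z ^+ 2 * Ng.
    apply: int_eq; rewrite intrM -eDz -hQa /qn mulrC divfK ?Dq0 //.
    rewrite eal id_unit hTg hNg ?(intrB, intrD, intrM, intrN, rmorphXn, pmulrn) //=.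
  have eone : Dz * Qa + g%:Z * (Tg - g%:Z * Ng) = 1 by rewrite ei; ring.
  have : (p%:Z %| Dz * Qa + g%:Z * (Tg - g%:Z * Ng))%Z.
    by apply: rpredD; [apply: dvdz_mulr | apply: dvdz_mulr; rewrite dvdz_nat].
  rewrite eone dvdz1 => /eqP hp1; have := prime_gt1 pp; lia.
have cop : coprimez p%:Z g%:Z by rewrite coprimezE /= prime_coprime.
have hH : forall x, c x -> forall Q T : int, qn x = Q%:~R -> trq x = T%:~R ->
    (p%:Z %| - T + g%:Z * Q)%Z.
  move=> x hx Q T hQ hT.
  have := H x hx (Dz + g%:Z * (- T + g%:Z * Q)).
  rewrite id_beta hQ hT eDz ?(intrB, intrD, intrM, intrN, pmulrn) => /(_ ltac:(ring)) h.
  have : (p%:Z %| g%:Z * (- T + g%:Z * Q))%Z.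
    have -> : g%:Z * (- T + g%:Z * Q) = (Dz + g%:Z * (- T + g%:Z * Q)) - Dz by ring.
    by apply: rpredB.
  by rewrite Gauss_dvdzr.
move=> x hx Q T hQ hT.
have hxD : c (kadd x (Dq, 0)) by apply: cD.
have h1 := hH _ hx _ _ hQ hT.
have h2 := hH _ hxD (Q + T + Dz) (T + 2 * Dz).
rewrite id_shift id_shift2 hQ hT eDz ?(intrB, intrD, intrM, intrN) in h2.
have {h2} h2 := h2 erefl erefl.
have h3 := hH _ hDc Dz (2 * Dz).
rewrite id_D trqD eDz ?(intrM) in h3; have {h3} h3 := h3 erefl erefl.
have hgT : (p%:Z %| g%:Z * T)%Z.
  have -> : g%:Z * T = (- (T + 2 * Dz) + g%:Z * (Q + T + Dz)) - (- T + g%:Z * Q) - (- (2 * Dz) + g%:Z * Dz) by ring.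
  by apply: rpredB; [apply: rpredB|].
have pT : (p%:Z %| T)%Z by rewrite -(Gauss_dvdzr _ cop).
split=> //.
rewrite -(Gauss_dvdzr _ cop).
have -> : g%:Z * Q = (- T + g%:Z * Q) + T by ring.
exact: rpredD.
Qed.

Lemma lam_id i j : kmul d (kmul d (kconj e1) e2) (lc e1 e2 i j) =
  kadd (kscale i (kmul d (kmul d (kconj e1) e1) e2))
   (kscale j (kadd (kmul d (kadd (kmul d (kconj (kadd e1 e2)) (kadd e1 e2))
     (kscale (-1) (kadd (kmul d (kconj e1) e1) (kmul d (kconj e2) e2)))) e2)
     (kscale (-1) (kmul d e1 (kmul d (kconj e2) e2))))).
Proof. rewrite /lc; qfeqz. Qed.

Lemma good_beta (g p : nat) : prime p -> ucop d K c g ->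
  exists x, c x /\ exists k : int,
    qn (kadd (Dq, 0) (kscale (-1) (kmul d (g%:R, 0) x))) = k%:~R /\ ~~ (p%:Z %| k)%Z.
Proof.
move=> pp hu; apply: NNPP => hno.
have H : forall x, c x -> forall k : int,
    qn (kadd (Dq, 0) (kscale (-1) (kmul d (g%:R, 0) x))) = k%:~R -> (p%:Z %| k)%Z.
  move=> x hx k hk; apply: contraT => hnk; exfalso; apply: hno; exists x; split=> //.
  by exists k.
have K1 := key_div pp hu H.
have [c0 [cD cZ]] := c_zc.
have he1 : c e1 by apply/hL; exists 1, 0; rewrite kscale1 kscale0 kadd0r.
have he2 : c e2 by apply/hL; exists 0, 1; rewrite kscale1 kscale0 kadd0.
have he3 : c (kadd e1 e2) by apply: cD.
have gQ : forall x, c x -> exists q : int, qn x = (q * p%:Z)%:~R.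
  move=> x hx; have [Q hQ] := qn_int hx; have [T hT] := trq_int (cO hx).
  have [_ /dvdzP [q hq]] := K1 x hx Q T hQ hT; exists q; by rewrite hQ hq.
have [q1 hq1] := gQ _ he1; have [q2 hq2] := gQ _ he2; have [q3 hq3] := gQ _ he3.
have hD := Dq0.
have hp : (p%:R : rat) != 0 by rewrite pnatr_eq0 -lt0n prime_gt0.
pose lam := kmul d ((p%:R * Dq)^-1, 0) (kmul d (kconj e1) e2).
have lamE : End_lat d c lam.
  move=> x /c_lc [i [j ->]].
  have -> : kmul d lam (lc e1 e2 i j) = lc e1 e2 (- (j * q2)) (i * q1 + j * (q3 - q1 - q2)).
    rewrite /lam -kmulA lam_id !sxx hq1 hq2 hq3 /lc.
    rewrite /kmul /kadd /kscale /=; apply: injective_projections => /=;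
      rewrite ?(intrB, intrD, intrM, intrN, pmulrn); field; rewrite ?hp ?hD //; by rewrite pmulrn.
  exact: lc_c.
have : O lam by case: hc => _ [_ [he _]]; apply/he.
move=> /Ouv [i0 [j0 [_ hu0]]].
move: hu0; rewrite /lam uRM uS -/Dq => hu0.
have : (p%:Z * j0 = 1).
  apply: int_eq; rewrite intrM.
  have hk := K0r.
  move: hu0; rewrite intrM => hu0; rewrite ?mulrz_nat in hu0 *.
  have hj : j0%:~R = (p%:R : rat)^-1.
    apply: (mulfI hk); rewrite -hu0; field; by rewrite hp hD.
  have -> : ((p%:Z)%:~R : rat) = p%:R by [].
  rewrite hj mulfV //.
move=> e; have := dvdz_mulr j0 (dvdzz p%:Z).
rewrite e dvdz1 => /eqP hp1; have := prime_gt1 pp; lia.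
Qed.

Lemma step0 (g p : nat) : prime p -> ucop d K c g ->
  exists nu, cong d K nu c g /\ ucop d K (lscale d nu c) p.
Proof.
move=> pp hu.
have [x [hx [F [hF hpF]]]] := good_beta pp hu.
have hD := Dq0.
pose be := kadd (Dq, 0) (kscale (-1) (kmul d (g%:R, 0) x)).
have hbe : c be.
  have [c0 [cD cZ]] := c_zc; have [_ [_ hDc]] := DqZ.
  apply: (cD _ _ hDc); apply: (cZ _ _ _); rewrite kmulRn; exact: (cZ _ _ hx).
exists (kmul d (Dq^-1, 0) (kconj be)); split.
  move=> y hy; have [z [hz ez]] := sigma_in hx hy; exists z; split=> //.
  have -> : kmul d (kmul d (Dq^-1, 0) (kconj be)) y =
      kadd y (kscale (-1) (kmul d (g%:R * Dq^-1, 0) (kmul d (kconj x) y))).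
    rewrite /be /kmul /kadd /kscale /kconj /=; apply: injective_projections => /=; by field.
  rewrite ez /kmul /kadd /kscale /=; apply: injective_projections => /=;
    rewrite ?mulrz_nat; by field.
have cop : coprimez p%:Z F.
  by rewrite coprimezE /= prime_coprime // -dvdz_nat /= -dvdzE.
have [[u v] /= huv] := coprimezP _ _ cop.
exists (kscale v (kmul d (kmul d (Dq^-1, 0) (kconj be)) be)), (kscale u kone); split.
  exists (kscale v be); split; first by have [_ [_ cZ]] := c_zc; apply: cZ.
  by rewrite kscale_mulr.
split; first exact/OZ/O1.
have e1' : kmul d (kmul d (Dq^-1, 0) (kconj be)) be = (F%:~R, 0).
  by rewrite -kmulA sxx -hF /kmul /=; apply: injective_projections => /=; field.
rewrite e1' /kscale /kadd /kone /=; apply: injective_projections => /=; last by ring.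
have h : ((u * p%:Z + v * F)%:~R : rat) = 1 by rewrite huv.
rewrite intrD !intrM in h; apply: esym; apply: (etrans _ h); ring.
Qed.

End Step.

Lemma step (d K : nat) (c : lat) (g p : nat) : (0 < K)%N -> prime p -> GI d K c -> ucop d K c g ->
  exists nu, cong d K nu c g /\ ucop d K (lscale d nu c) p.
Proof.
move=> K0 pp hc hu; have [hl _] := hc; case: hl => e1 [e2 [hi hL]].
exact: (step0 K0 hc hi hL pp hu).
Qed.
Set Implicit Arguments. Unset Strict Implicit. Unset Printing Implicit Defensive.
Import Order.TTheory GRing.Theory Num.Theory.
Local Open Scope ring_scope.

Section Ind.
Variables (d K : nat).
Hypothesis K0 : (0 < K)%N.
Local Notation O := (order_of d K).

Lemma ucop_eq L L' q : lat_eq L L' -> ucop d K L q -> ucop d K L' q.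
Proof. move=> e [al [ga [h1 h2]]]; exists al, ga; split=> //; exact/e. Qed.

Lemma lscaleM nu1 nu2 c : lat_eq (lscale d (kmul d nu2 nu1) c) (lscale d nu2 (lscale d nu1 c)).
Proof.
move=> x; split.
  case=> y [hy ->]; exists (kmul d nu1 y); split; first by exists y.
  by rewrite kmulA.
case=> y [[z [hz ->]] ->]; exists z; split=> //; by rewrite kmulA.
Qed.

Lemma coprime_all N : (0 < N)%N -> forall g c, (0 < g)%N -> GI d K c -> ucop d K c g ->
  exists nu, totally_positive d nu /\ cong d K nu c g /\ ucop d K (lscale d nu c) N.
Proof.
elim/ltn_ind: N => N IH N0 g c g0 hc hu.
have [c0 [cD cZ]] := GI_zclosed hc.
case: (ltnP 1 N) => N1; last first.
  have -> : N = 1%N by lia.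
  exists kone; split; first exact: tp1.
  split.
    move=> x hx; exists kzero; split; first exact: O0.
    by rewrite kmul1 kaddN kscalez.
  exists kzero, kone; split; first by exists kzero; rewrite kmul0r.
  by split; [exact: O1 | rewrite kscale1 kadd0].
set p := pdiv N; have pp : prime p by exact: pdiv_prime.
have p0 : (0 < p)%N by exact: prime_gt0.
have eN : N = (p * (N %/ p))%N by rewrite mulnC divnK // pdiv_dvd.
have N'lt : (N %/ p < N)%N by apply: ltn_Pdiv; [exact: prime_gt1 | lia].
have N'0 : (0 < N %/ p)%N by rewrite divn_gt0 // dvdn_leq // pdiv_dvd.
have [nu1 [cg1 uc1]] := step K0 pp hc hu.
have gp0 : (0 < g * p)%N by rewrite muln_gt0 g0 p0.
have [k tpk] := tp_shift d nu1 gp0.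
set nu1' := kadd nu1 (kscale (g * p * k)%N%:Z kone) in tpk.
have cg1' : cong d K nu1' c g.
  move=> x hx; have [z [hz ez]] := cg1 x hx.
  exists (kadd z (kscale (-1) (kscale (p * k)%N%:Z x))); split.
    apply: OD => //; apply: OZ; apply: OZ; case: hc => _ [_ [_ hs]]; exact: hs.
  have e2 := ez; move: e2; rewrite /nu1' => e2.
  have -> : kadd x (kscale (-1) (kmul d (kadd nu1 (kscale (g * p * k)%N%:Z kone)) x)) =
     kadd (kadd x (kscale (-1) (kmul d nu1 x))) (kscale (-1) (kscale (g * p * k)%N%:Z x)).
    qfeqz.
  rewrite ez -mulnA; qfeqz.
have uc1' : ucop d K (lscale d nu1' c) p.
  case: uc1 => al [ga [[y [hy ->]] [hga e]]].
  exists (kmul d nu1' y), (kadd ga (kscale (-1) (kscale (g * k)%N%:Z y))); split; first by exists y.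
  split.
    apply: OD => //; apply: OZ; apply: OZ; case: hc => _ [_ [_ hs]]; exact: hs.
  rewrite e /nu1'; qfeqz.
have kn1 := tp_kn tpk.
have hc1 : GI d K (lscale d nu1' c) by apply: GI_scale => //; exact: cong_in cg1'.
have ug1 : ucop d K (lscale d nu1' c) g.
  by apply: (@ucop_cong _ _ _ _ _ 1) => //; rewrite muln1.
have ugp : ucop d K (lscale d nu1' c) (g * p) by apply: ucop_mul.
have [nu2 [tp2 [cg2 uc2]]] := IH _ N'lt N'0 (g * p)%N _ gp0 hc1 ugp.
exists (kmul d nu2 nu1'); split; first exact: tpM.
split.
  move=> x hx; have [z1 [hz1 ez1]] := cg1' x hx.
  have [z2 [hz2 ez2]] := cg2 (kmul d nu1' x) (ex_intro _ x (conj hx erefl)).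
  exists (kadd z1 (kscale p%:Z z2)); split; first by apply: OD => //; apply: OZ.
  have -> : kadd x (kscale (-1) (kmul d (kmul d nu2 nu1') x)) =
    kadd (kadd x (kscale (-1) (kmul d nu1' x)))
      (kadd (kmul d nu1' x) (kscale (-1) (kmul d nu2 (kmul d nu1' x)))) by qfeqz.
  rewrite ez1 ez2; qfeqz.
apply: (ucop_eq (fun x => iff_sym (lscaleM _ _ _ x))).
have hc2 : GI d K (lscale d nu2 (lscale d nu1' c)).
  by apply: GI_scale => //; [exact: tp_kn | exact: cong_in cg2].
rewrite eN; apply: ucop_mul => //.
apply: (@ucop_cong _ _ _ _ _ g) => //; by rewrite mulnC.
Qed.
End Ind.
Set Implicit Arguments. Unset Strict Implicit. Unset Printing Implicit Defensive.
Import Order.TTheory GRing.Theory Num.Theory.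
Local Open Scope ring_scope.

Section Ext.
Variables (d n f m : nat).
Hypotheses (n0 : (0 < n)%N) (f0 : (0 < f)%N).
Local Notation O := (order_of d m).
Local Notation O' := (order_of d (n * m)).
Local Notation W := (kscale m%:Z (omega d)).

Variable c : lat.
Hypothesis hc : GI d (n * m) c.
Hypothesis hu : ucop d (n * m) c (n * f).

Definition ext : lat := fun x => exists y z, c y /\ c z /\ x = kadd y (kmul d W z).

Let cZc := GI_zclosed hc.
Let cst : forall al x, O' al -> c x -> c (kmul d al x). Proof. by case: hc => _ [h _]. Qed.
Let cE : lat_eq (End_lat d c) O'. Proof. by case: hc => _ [_ [h _]]. Qed.
Let cO : subl c O'. Proof. by case: hc => _ [_ [_ h]]. Qed.

Lemma WO : O W. Proof. exact: OW. Qed.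
Lemma nWO : O' (kscale n%:Z W).
Proof. rewrite kscaleA -PoszM; exact: OW. Qed.

Lemma ext_zc : zclosed ext.
Proof.
case: cZc => c0 [cD cZ]; split; [|split].
- by exists kzero, kzero; split=> //; split=> //; rewrite kmul0r kadd0.
- move=> x y [y1 [z1 [h1 [h2 ->]]]] [y2 [z2 [h3 [h4 ->]]]].
  exists (kadd y1 y2), (kadd z1 z2); split; first exact: cD.
  split; first exact: cD. qfeqz.
- move=> k x [y [z [h1 [h2 ->]]]]; exists (kscale k y), (kscale k z); split; first exact: cZ.
  split; first exact: cZ. qfeqz.
Qed.

Lemma c_ext x : c x -> ext x.
Proof. case: cZc => c0 _ hx; by exists x, kzero; split=> //; split=> //; rewrite kmul0r kadd0r. Qed.
Lemma Wc_ext z : c z -> ext (kmul d W z).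
Proof. case: cZc => c0 _ hz; by exists kzero, z; split=> //; split=> //; rewrite kadd0. Qed.

Lemma ext_O x : ext x -> O x.
Proof.
case=> y [z [h1 [h2 ->]]]; apply: OD; first by apply: (Osub (n:=n)); exact: cO.
apply: OM; first exact: WO. by apply: (Osub (n:=n)); exact: cO.
Qed.

Lemma ext_st al x : O al -> ext x -> ext (kmul d al x).
Proof.
move=> hal hx; have [e0 [eD eZ]] := ext_zc.
have [al' [j [hal' eal]]] := Odec n hal.
have [y0 [j0 [hy0 eW]]] := Odec n (OM WO WO).
case: hx => y [z [hy [hz ->]]]; rewrite kmulDr; apply: (eD _ _).
  rewrite eal kmulDl; apply: (eD _ _); first exact/c_ext/cst.
  by rewrite kscale_mull; apply: (eZ _ _); apply: Wc_ext.
rewrite eal kmulDl; apply: (eD _ _).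
  rewrite kmulA [kmul d al' W]kmulC -kmulA; apply: Wc_ext; exact: cst.
rewrite kscale_mull kmulA eW kmulDl; apply: (eZ _ _); apply: (eD _ _).
  apply: c_ext; exact: cst.
rewrite kscale_mull; apply: (eZ _ _); exact: Wc_ext.
Qed.

Lemma n_ext x : ext x -> c (kscale n%:Z x).
Proof.
case: cZc => c0 [cD cZ]; case=> y [z [hy [hz ->]]].
rewrite kscaleDr; apply: (cD _ _); first exact: cZ.
rewrite -kscale_mull; apply: cst => //; exact: nWO.
Qed.

Lemma ext_lat : is_lattice ext.
Proof.
have hk : kn d ((n%:R)^-1, 0) != 0.
  rewrite /kn /= expr0n /= mulr0 subr0 expf_neq0 // invr_eq0 pnatr_eq0 -lt0n //.
have hL := lattice_scale (GI_lat hc) hk.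
apply: (sublattice n0 hL ext_zc).
  move=> x hx; exists (kscale n%:Z x); split; first exact: n_ext.
  rewrite /kmul /kscale /=; have -> : ((n%:Z)%:~R : rat) = n%:R by []. apply: injective_projections => /=; field; by rewrite pnatr_eq0 -lt0n.
move=> x [y [hy ->]].
have -> : kscale n%:Z (kmul d ((n%:R)^-1, 0) y) = y.
  rewrite /kmul /kscale /=; have -> : ((n%:Z)%:~R : rat) = n%:R by []. apply: injective_projections => /=; field; by rewrite pnatr_eq0 -lt0n.
exact: c_ext.
Qed.

Lemma ext_End : lat_eq (End_lat d ext) O.
Proof.
have [al [ga [hal [hga e]]]] := hu.
move=> l; split; last by move=> hl x hx; apply: ext_st.
move=> hl.
have nl : O' (kscale n%:Z l).
  apply/cE => y hy; rewrite kscale_mull; apply: n_ext; apply: hl; exact: c_ext.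
have -> : l = kadd (kmul d l al) (kscale f%:Z (kmul d (kscale n%:Z l) ga)).
  rewrite -[l in LHS](kmul1r d) e; qfeqz.
apply: OD; first by apply: ext_O; apply: hl; exact: c_ext.
apply: OZ; apply: (Osub (n:=n)); exact: OM.
Qed.

Lemma ext_IO : IO d O (int_ideal d (n * f) O) ext.
Proof.
have [al [ga [hal [hga e]]]] := hu.
split; first by split; [split; [exact: ext_lat | move=> *; exact: ext_st] | exact: ext_End].
split; first by move=> x; exact: ext_O.
move=> x; split.
  case=> y [z [hy [/int_idealP [w [hw ->]] ->]]]; apply: OD; [exact: ext_O | exact: OZ hw].
move=> hx; exists (kmul d x al), (kscale (n * f)%N%:Z (kmul d x ga)); split.
  by apply: ext_st => //; apply: c_ext.
split; last by rewrite -kscale_mulr -kmulDr -e kmul1r.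
apply/int_idealP; exists (kmul d x ga); split=> //; apply: OM => //; exact: (Osub (n:=n)).
Qed.

Lemma ext_cap : lat_eq (lcap ext O') c.
Proof.
have [al [ga [hal [hga e]]]] := hu.
have [c0 [cD cZ]] := cZc.
move=> x; split; last by move=> hx; split; [exact: c_ext | exact: cO].
case=> [[y [z [hy [hz ->]]]] hxO].
have hWz : O' (kmul d W z).
  have -> : kmul d W z = kadd (kadd y (kmul d W z)) (kscale (-1) y) by qfeqz.
  apply: OD => //; apply: OZ; exact: cO.
apply: (cD _ _ hy).
have -> : kmul d W z = kadd (kmul d (kmul d W z) al)
   (kscale f%:Z (kmul d (kscale n%:Z W) (kmul d z ga))).
  rewrite -[kmul d W z in LHS](kmul1r d) e; qfeqz.
apply: (cD _ _); first exact: cst.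
apply: (cZ _ _); apply: cst; first exact: nWO.
rewrite kmulC; exact: cst.
Qed.

End Ext.
Set Implicit Arguments. Unset Strict Implicit. Unset Printing Implicit Defensive.
Import Order.TTheory GRing.Theory Num.Theory.
Local Open Scope ring_scope.

Theorem proposition2p1 (d n f m : nat) :
  real_quadratic d -> (0 < n)%N -> (0 < f)%N -> (0 < m)%N ->
  let O := order_of d m in
  let O' := order_of d (n * m) in
  let nfr := int_ideal d (n * f) O in
  let fr' := int_ideal d f O' in
  (forall a, IO d O nfr a ->
     invertible d O' (lcap a O') /\ IO d O' fr' (lcap a O')) /\
  (forall a a', IO d O nfr a -> IO d O nfr a' ->
     lat_eq (lcap (lmul d a a') O') (lmul d (lcap a O') (lcap a' O'))) /\
  (forall a a', IO d O nfr a -> IO d O nfr a' ->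
     equiv_mod d (n * f) a a' -> equiv_mod d f (lcap a O') (lcap a' O')) /\
  (forall b, IO d O' fr' b ->
     exists a, IO d O nfr a /\ equiv_mod d f (lcap a O') b).
Proof.
move=> _ n0 f0 m0; cbv zeta.
split; [|split; [|split]].
- move=> a Ha; have h := theta_IO n0 Ha; split=> //; by case: h.
- move=> a a'; exact: theta_mul.
- move=> a a'; exact: theta_equiv.
move=> b Hb.
have K0 : (0 < n * m)%N by rewrite muln_gt0 n0 m0.
have [hbG hbu] := (IO_GI _ _ _ _).1 Hb.
have [nu [tp [cg uc]]] := coprime_all K0 n0 f0 hbG hbu.
have hkn := tp_kn tp.
have hcG : GI d (n * m) (lscale d nu b) := GI_scale hbG hkn (cong_in hbG cg).
have ucf : ucop d (n * m) (lscale d nu b) f.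
  by apply: (@ucop_cong _ _ _ _ _ 1) => //; rewrite muln1.
have ucnf : ucop d (n * m) (lscale d nu b) (n * f) := ucop_mul hcG uc ucf.
exists (ext d m (lscale d nu b)); split; first exact: ext_IO.
have hcap := ext_cap hcG ucnf.
set A := lcap _ _ in hcap *.
have hAst : forall al x, order_of d (n * m) al -> A x -> A (kmul d al x).
  move=> al x hal /hcap hx; apply/hcap; by case: hcG => _ [hs _]; apply: hs.
pose l := kinv d nu.
have lnu : forall y, kmul d l (kmul d nu y) = y.
  by move=> y; rewrite kmulA [kmul d l nu]kmulC kmulV // kmul1.
exists l; split; first exact: tp_inv.
split.
  exists (kmul d ((f%:R)^-1, 0) (kadd l (kscale (-1) kone))); split; last first.
    have hf : (f%:R : rat) != 0 by rewrite pnatr_eq0 -lt0n.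
    rewrite /kmul /kadd /kscale /kone /=.
    have -> : ((f%:Z)%:~R : rat) = f%:R by [].
    apply: injective_projections => /=; field; by rewrite hf hkn.
  move=> x /hcap [y [hy ->]] w hw; apply: hAst => //.
  have [z [hz ez]] := cg y hy.
  have -> : kmul d (kmul d ((f%:R)^-1, 0) (kadd l (kscale (-1) kone))) (kmul d nu y) =
    kmul d ((f%:R)^-1, 0) (kadd (kmul d l (kmul d nu y)) (kscale (-1) (kmul d nu y))) by qfeqz.
  rewrite lnu ez.
  have -> : kmul d ((f%:R)^-1, 0) (kscale f%:Z z) = z.
    rewrite /kmul /kscale /=; have -> : ((f%:Z)%:~R : rat) = f%:R by [].
    case: z {hz ez} => z1 z2; apply: injective_projections => /=;
      by field; rewrite pnatr_eq0 -lt0n.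
  exact: hz.
move=> x; split.
  case=> w [/hcap [y [hy ->]] ->]; by rewrite lnu.
move=> hx; exists (kmul d nu x); split; last by rewrite lnu.
by apply/hcap; exists x.
Qed.
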